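(* Let $(X,\mu,T)$ be a probability-preserving system and $\mathcal{P}$ a finite Borel partition of $X$. Then there is a function $g:\mathbb{N}\cup\{0\}\to[0,\infty)$ with $g(m)=o(m)$ as $m\to\infty$ such that for all bounded (possibly empty) discrete intervals $I,J\subseteq\mathbb{Z}$ for which $I\cup J$ is a discrete interval, \[\mathrm{I}_\mu(\mathcal{P}^J;\mathcal{P}^I\,|\,\mathcal{P}^{I\cap J})\le g(|J\setminus I|).\]
   Context: $\mathcal{P}^F=\bigvee_{n\in F}T^{-n}\mathcal{P}$ for finite $F\subseteq\mathbb{Z}$ (the trivial partition if $F=\emptyset$). $\mathrm{I}_\mu(\cdot;\cdot\,|\,\cdot)$ is conditional mutual information: $\mathrm{I}_\mu(\mathcal{A};\mathcal{B}\,|\,\mathcal{C})=\mathrm{H}_\mu(\mathcal{A}\,|\,\mathcal{C})-\mathrm{H}_\mu(\mathcal{A}\,|\,\mathcal{B}\vee\mathcal{C})$. *)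

(* Defs.v *)
From Stdlib Require Import Reals ZArith List.
Open Scope R_scope.
Import ListNotations.

Definition sigma_algebra {X : Type} (M : (X -> Prop) -> Prop) : Prop :=
  M (fun _ => True) /\
  (forall A, M A -> M (fun x => ~ A x)) /\
  (forall A : nat -> X -> Prop, (forall n, M (A n)) -> M (fun x => exists n, A n x)).

Definition probability_measure {X : Type} (M : (X -> Prop) -> Prop)
  (mu : (X -> Prop) -> R) : Prop :=
  sigma_algebra M /\
  (forall A, M A -> 0 <= mu A) /\
  mu (fun _ => True) = 1 /\
  (forall A : nat -> X -> Prop,
     (forall n, M (A n)) ->
     (forall n m x, n <> m -> A n x -> A m x -> False) ->
     infinite_sum (fun n => mu (A n)) (mu (fun x => exists n, A n x))).

Definition measurable_map {X : Type} (M : (X -> Prop) -> Prop) (f : X -> X) : Prop :=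
  forall A, M A -> M (fun x => A (f x)).

Definition ppsystem {X : Type} (M : (X -> Prop) -> Prop) (mu : (X -> Prop) -> R)
  (T Tinv : X -> X) : Prop :=
  probability_measure M mu /\
  measurable_map M T /\ measurable_map M Tinv /\
  (forall x, T (Tinv x) = x) /\ (forall x, Tinv (T x) = x) /\
  (forall A, M A -> mu (fun x => A (T x)) = mu A).

Definition Tz {X : Type} (T Tinv : X -> X) (n : Z) : X -> X :=
  match n with
  | Z0 => fun x => x
  | Zpos p => Nat.iter (Pos.to_nat p) T
  | Zneg p => Nat.iter (Pos.to_nat p) Tinv
  end.

(* A finite measurable partition with k cells is given by a labelling
   p : X -> nat with values < k; its cells are {x | p x = i}, i < k. *)
Definition finite_partition {X : Type} (M : (X -> Prop) -> Prop) (k : nat)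
  (p : X -> nat) : Prop :=
  (forall x, (p x < k)%nat) /\ (forall i, M (fun x => p x = i)).

(* P^F = \/_{n in F} T^{-n} P : labelling x |-> (p (T^n x))_{n in F} *)
Definition joinP {X : Type} (T Tinv : X -> X) (p : X -> nat) (F : list Z)
  : X -> list nat :=
  fun x => map (fun n => p (Tz T Tinv n x)) F.

(* all possible labels of P^F when |F| = m : words of length m over {0..k-1} *)
Fixpoint words (k m : nat) : list (list nat) :=
  match m with
  | O => [[]]
  | S m' => flat_map (fun i => map (cons i) (words k m')) (seq 0 k)
  end.

Definition sumR {A : Type} (l : list A) (f : A -> R) : R :=
  fold_right Rplus 0 (map f l).

Definition ent_term (m mc : R) : R :=
  if Rle_dec m 0 then 0 else - m * ln (m / mc).

(* H_mu(A | C) for finite partitions given by labellings a, c whose label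
   sets are enumerated (without repetition) by la, lc *)
Definition Hcond {X A C : Type} (mu : (X -> Prop) -> R)
  (a : X -> A) (la : list A) (c : X -> C) (lc : list C) : R :=
  sumR la (fun u => sumR lc (fun v =>
     ent_term (mu (fun x => a x = u /\ c x = v)) (mu (fun x => c x = v)))).

Definition Icond {X A B C : Type} (mu : (X -> Prop) -> R)
  (a : X -> A) (la : list A) (b : X -> B) (lb : list B)
  (c : X -> C) (lc : list C) : R :=
  Hcond mu a la c lc
  - Hcond mu a la (fun x => (b x, c x)) (list_prod lb lc).

Definition Ipart {X : Type} (mu : (X -> Prop) -> R) (T Tinv : X -> X)
  (k : nat) (p : X -> nat) (J I K : list Z) : R :=
  Icond mu (joinP T Tinv p J) (words k (length J))
           (joinP T Tinv p I) (words k (length I))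
           (joinP T Tinv p K) (words k (length K)).

(* Zinterval a b = [a, b) = {a, a+1, ..., b-1} (empty if b <= a) *)
Definition Zinterval (a b : Z) : list Z :=
  map (fun i => (a + Z.of_nat i)%Z) (seq 0 (Z.to_nat (b - a))).

Definition is_Zinterval (S : Z -> Prop) : Prop :=
  exists a b : Z, forall n, S n <-> (a <= n < b)%Z.

Definition Zinter (I J : list Z) : list Z :=
  filter (fun n => existsb (Z.eqb n) J) I.

Definition Zdiff (J I : list Z) : list Z :=
  filter (fun n => negb (existsb (Z.eqb n) I)) J.

(* Main.v *)
Require Import Defs.
From Stdlib Require Import Reals ZArith List Lia Lra Permutation Classical FunctionalExtensionality PropExtensionality.
Open Scope R_scope.
Import ListNotations.

Lemma pred_ext {X : Type} (P Q : X -> Prop) : (forall x, P x <-> Q x) -> P = Q.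
Proof. intro H; apply functional_extensionality; intro x; apply propositional_extensionality; auto. Qed.

Lemma mu_ext {X : Type} (mu : (X -> Prop) -> R) (P Q : X -> Prop) :
  (forall x, P x <-> Q x) -> mu P = mu Q.
Proof. intro H; rewrite (pred_ext P Q H); reflexivity. Qed.

Lemma M_ext {X : Type} (M : (X -> Prop) -> Prop) (P Q : X -> Prop) :
  (forall x, P x <-> Q x) -> M P -> M Q.
Proof. intro H; rewrite (pred_ext P Q H); auto. Qed.


Lemma M_compl {X} M (A : X -> Prop) : sigma_algebra M -> M A -> M (fun x => ~ A x).
Proof. intros (_&H&_) ; auto. Qed.

Lemma M_empty {X} M : @sigma_algebra X M -> M (fun _ => False).
Proof. intros HS. apply (M_ext M (fun x => ~ True)). { intro; tauto. }
  apply M_compl; auto. apply HS. Qed.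

Lemma M_union {X} M (A B : X -> Prop) : sigma_algebra M -> M A -> M B -> M (fun x => A x \/ B x).
Proof.
  intros HS HA HB. destruct HS as (H1&H2&H3).
  apply (M_ext M (fun x => exists n, (fun n => if Nat.eqb n 0 then A else B) n x)).
  { intro x; split. - intros [n Hn]; destruct (Nat.eqb n 0); auto.
    - intros [H|H]; [exists 0%nat|exists 1%nat]; auto. }
  apply H3. intro n; destruct (Nat.eqb n 0); auto.
Qed.

Lemma M_inter {X} M (A B : X -> Prop) : sigma_algebra M -> M A -> M B -> M (fun x => A x /\ B x).
Proof.
  intros HS HA HB.
  apply (M_ext M (fun x => ~ (~ A x \/ ~ B x))).
  { intro x; split. - intro H; split; apply NNPP; tauto. - tauto. }
  apply M_compl; auto. apply M_union; auto; apply M_compl; auto.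
Qed.

Lemma mu_empty {X} M mu : @probability_measure X M mu -> mu (fun _ => False) = 0.
Proof.
  intros (HS&Hpos&H1&Hadd).
  pose proof (Hadd (fun _ _ => False)) as H.
  assert (Hm : forall n:nat, M (fun _ => False)) by (intro; apply M_empty; auto).
  specialize (H Hm (fun n m x _ h _ => h)). cbv beta in H.
  rewrite (mu_ext mu (fun x => exists n : nat, False) (fun _ => False)) in H
    by (intro; split; [intros [_ []]|intros []]).
  set (c := mu (fun _ => False)) in *.
  assert (c0 : 0 <= c) by (apply Hpos; apply M_empty; auto).
  destruct (Req_dec c 0) as [E|E]; auto.
  destruct (H c) as [N HN]; [lra|].
  specialize (HN (S N) ltac:(lia)). rewrite sum_cte in HN.
  unfold R_dist in HN. rewrite !S_INR in HN. pose proof (pos_INR N).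
  rewrite Rabs_right in HN; nra.
Qed.

Lemma mu_add {X} M mu (A B : X -> Prop) : @probability_measure X M mu -> M A -> M B ->
  (forall x, A x -> B x -> False) -> mu (fun x => A x \/ B x) = mu A + mu B.
Proof.
  intros HP HA HB Hd. pose proof (mu_empty M mu HP) as E0.
  destruct HP as (HS&Hpos&H1&Hadd).
  set (F := fun n : nat => match n with 0%nat => A | 1%nat => B | _ => fun _ => False end).
  assert (HF : forall n, M (F n)) by (intros [|[|n]]; simpl; auto; apply M_empty; auto).
  assert (Hdj : forall n m x, n <> m -> F n x -> F m x -> False).
  { intros [|[|n]] [|[|m]] x Hnm; simpl; try tauto; try lia; eauto. }
  pose proof (Hadd F HF Hdj) as Hs.
  rewrite (mu_ext mu (fun x => exists n, F n x) (fun x => A x \/ B x)) in Hs.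
  2:{ intro x; split. - intros [[|[|n]] h]; simpl in h; tauto.
      - intros [h|h]; [exists 0%nat|exists 1%nat]; auto. }
  apply (uniqueness_sum (fun n => mu (F n))); auto.
  intros eps Heps. exists 1%nat. intros n Hn.
  assert (sum_f_R0 (fun n => mu (F n)) n = mu A + mu B).
  { induction n as [|n IH]; [lia|]. destruct n as [|n].
    - simpl. reflexivity.
    - rewrite tech5, IH by lia. simpl. rewrite E0. ring. }
  rewrite H. unfold R_dist. rewrite Rminus_diag, Rabs_R0. auto.
Qed.

Lemma mu_mono {X} M mu (A B : X -> Prop) : @probability_measure X M mu -> M A -> M B ->
  (forall x, A x -> B x) -> mu A <= mu B.
Proof.
  intros HP HA HB Hi. pose proof HP as (HS&Hpos&_).
  rewrite (mu_ext mu B (fun x => A x \/ (B x /\ ~ A x))) by (intro x; split; [intro; destruct (classic (A x)); tauto|intros [h|h]; [auto|tauto]]).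
  rewrite (mu_add M mu); auto.
  - assert (0 <= mu (fun x => B x /\ ~ A x)); [apply Hpos; apply M_inter; auto; apply M_compl; auto|lra].
  - apply M_inter; auto; apply M_compl; auto.
  - tauto.
Qed.

Lemma mu_nonneg {X} M mu (A : X -> Prop) : @probability_measure X M mu -> M A -> 0 <= mu A.
Proof. intros (_&H&_) HA; auto. Qed.

Lemma mu_empty' {X} M mu (A : X -> Prop) : @probability_measure X M mu -> (forall x, ~ A x) -> mu A = 0.
Proof. intros HP H. rewrite (mu_ext mu A (fun _ => False)) by (intro x; split; [apply H|tauto]).
  eapply mu_empty; eauto. Qed.

Lemma sumR_nil {A} (f : A -> R) : sumR [] f = 0. Proof. reflexivity. Qed.
Lemma sumR_cons {A} (a : A) l f : sumR (a :: l) f = f a + sumR l f. Proof. reflexivity. Qed.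
Lemma sumR_app {A} (l1 l2 : list A) f : sumR (l1 ++ l2) f = sumR l1 f + sumR l2 f.
Proof. induction l1; simpl; [rewrite sumR_nil; ring|]. unfold sumR in *; simpl; rewrite IHl1; ring. Qed.
Lemma sumR_ext {A} (l : list A) f g : (forall x, In x l -> f x = g x) -> sumR l f = sumR l g.
Proof. induction l; intros H; [reflexivity|]. rewrite !sumR_cons, H, IHl; simpl; auto; intros; apply H; simpl; auto. Qed.
Lemma sumR_plus {A} (l : list A) f g : sumR l (fun x => f x + g x) = sumR l f + sumR l g.
Proof. induction l; [simpl; unfold sumR; simpl; ring|]. rewrite !sumR_cons, IHl; ring. Qed.
Lemma sumR_scal {A} (l : list A) c f : sumR l (fun x => c * f x) = c * sumR l f.
Proof. induction l; [unfold sumR; simpl; ring|]. rewrite !sumR_cons, IHl; ring. Qed.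
Lemma sumR_opp {A} (l : list A) f : sumR l (fun x => - f x) = - sumR l f.
Proof. induction l; [unfold sumR; simpl; ring|]. rewrite !sumR_cons, IHl; ring. Qed.
Lemma sumR_le {A} (l : list A) f g : (forall x, In x l -> f x <= g x) -> sumR l f <= sumR l g.
Proof. induction l; intros H; [unfold sumR; simpl; lra|]. rewrite !sumR_cons.
  assert (f a <= g a) by (apply H; simpl; auto). assert (sumR l f <= sumR l g) by (apply IHl; intros; apply H; simpl; auto). lra. Qed.
Lemma sumR_zero {A} (l : list A) f : (forall x, In x l -> f x = 0) -> sumR l f = 0.
Proof. intro H. rewrite (sumR_ext l f (fun _ => 0)) by auto. induction l; [reflexivity|]. rewrite sumR_cons, IHl; [ring|]. intros; apply H; simpl; auto. Qed.
Lemma sumR_map {A B} (l : list A) (h : A -> B) f : sumR (map h l) f = sumR l (fun x => f (h x)).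
Proof. unfold sumR. rewrite map_map. reflexivity. Qed.
Lemma sumR_prod {A B} (la : list A) (lb : list B) F :
  sumR (list_prod la lb) F = sumR la (fun u => sumR lb (fun v => F (u, v))).
Proof. induction la; [reflexivity|]. simpl list_prod. rewrite sumR_app, sumR_cons, IHla, sumR_map. reflexivity. Qed.
Lemma sumR_swap {A B} (la : list A) (lb : list B) F :
  sumR la (fun u => sumR lb (fun v => F u v)) = sumR lb (fun v => sumR la (fun u => F u v)).
Proof. induction la.
  - rewrite sumR_nil. symmetry; apply sumR_zero; intros; reflexivity.
  - rewrite sumR_cons, IHla. rewrite <- sumR_plus. apply sumR_ext; intros; rewrite sumR_cons; reflexivity. Qed.
Lemma sumR_single {A} (l : list A) f v0 : NoDup l -> In v0 l ->
  (forall v, In v l -> v <> v0 -> f v = 0) -> sumR l f = f v0.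
Proof.
  induction l as [|a l IH]; intros Hnd Hin H; [destruct Hin|].
  inversion Hnd; subst. rewrite sumR_cons. destruct Hin as [<-|Hin].
  - rewrite sumR_zero; [ring|]. intros v Hv. apply H; simpl; auto. intros ->; auto.
  - rewrite IH; auto. rewrite H; simpl; auto; [ring|]. intros ->; auto.
    intros v Hv; apply H; simpl; auto.
Qed.

Lemma M_inlist {X B} M (g : X -> B) l : sigma_algebra M -> (forall u, M (fun x => g x = u)) ->
  M (fun x => In (g x) l).
Proof.
  intros HS Hg. induction l as [|a l IH].
  - simpl. apply M_empty; auto.
  - simpl. apply (M_ext M (fun x => g x = a \/ In (g x) l)).
    { intro x; split; intros [h|h]; auto. }
    apply M_union; auto.
Qed.

Lemma sum_cover_gen {X B} M mu (S : X -> Prop) (g : X -> B) l :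
  probability_measure M mu -> M S -> (forall u, M (fun x => g x = u)) -> NoDup l ->
  sumR l (fun v => mu (fun x => S x /\ g x = v)) = mu (fun x => S x /\ In (g x) l).
Proof.
  intros HP HSm Hg Hnd. pose proof HP as (HS&_).
  induction l as [|a l IH].
  - rewrite sumR_nil. symmetry. apply (mu_empty' M); auto. simpl; tauto.
  - inversion Hnd; subst. rewrite sumR_cons, IH by auto.
    rewrite (mu_ext mu (fun x => S x /\ In (g x) (a :: l))
                       (fun x => (S x /\ g x = a) \/ (S x /\ In (g x) l))).
    2:{ intro x; simpl; split; [intros [h [h'|h']]; auto|intros [[h h']|[h h']]; auto]. }
    rewrite (mu_add M mu); auto.
    + apply M_inter; auto.
    + apply M_inter; auto. apply M_inlist; auto.
    + intros x [_ h1] [_ h2]. subst. auto.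
Qed.

Lemma sum_cover {X B} M mu (S : X -> Prop) (g : X -> B) l :
  probability_measure M mu -> M S -> (forall u, M (fun x => g x = u)) -> NoDup l ->
  (forall x, In (g x) l) ->
  sumR l (fun v => mu (fun x => S x /\ g x = v)) = mu S.
Proof.
  intros. rewrite (sum_cover_gen M); auto. apply mu_ext. intro x; split; [tauto|auto].
Qed.

Definition phi (x : R) : R := - (x * ln x).

Definition Hent {X A} (mu : (X -> Prop) -> R) (f : X -> A) (lf : list A) : R :=
  sumR lf (fun u => phi (mu (fun x => f x = u))).

Definition Good {X A} (M : (X -> Prop) -> Prop) (f : X -> A) (lf : list A) : Prop :=
  NoDup lf /\ (forall x, In (f x) lf) /\ (forall u, M (fun x => f x = u)).

Lemma NoDup_list_prod {A B} (la : list A) (lb : list B) : NoDup la -> NoDup lb -> NoDup (list_prod la lb).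
Proof.
  induction la as [|a la IH]; intros H1 H2; simpl; [constructor|].
  inversion H1; subst. apply NoDup_app; auto.
  - apply FinFun.Injective_map_NoDup; auto. intros x y E; inversion E; auto.
  - intros [u v] Hi Hi2. apply in_map_iff in Hi. destruct Hi as [w [E _]]. inversion E; subst.
    apply in_prod_iff in Hi2. tauto.
Qed.

Lemma Good_pair {X A B} M (f : X -> A) lf (g : X -> B) lg : sigma_algebra M ->
  Good M f lf -> Good M g lg -> Good M (fun x => (f x, g x)) (list_prod lf lg).
Proof.
  intros HS (H1&H2&H3) (G1&G2&G3). split; [|split].
  - apply NoDup_list_prod; auto.
  - intro x. apply in_prod_iff; auto.
  - intros [u v]. apply (M_ext M (fun x => f x = u /\ g x = v)).
    { intro x; split; [intros [-> ->]; auto|intro E; inversion E; auto]. }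
    apply M_inter; auto.
Qed.

Lemma Hent_pair {X A B} (mu : (X -> Prop) -> R) (f : X -> A) lf (g : X -> B) lg :
  Hent mu (fun x => (f x, g x)) (list_prod lf lg) =
  sumR lf (fun u => sumR lg (fun v => phi (mu (fun x => f x = u /\ g x = v)))).
Proof.
  unfold Hent. rewrite sumR_prod. apply sumR_ext; intros u _. apply sumR_ext; intros v _.
  f_equal. apply mu_ext. intro x; split; [intro E; inversion E; auto|intros [-> ->]; auto].
Qed.

Lemma phi0 : phi 0 = 0. Proof. unfold phi; ring. Qed.

Lemma Hdet {X A B} M mu (f : X -> A) lf (g : X -> B) lg (h : A -> B) :
  probability_measure M mu -> Good M f lf -> Good M g lg -> (forall x, g x = h (f x)) ->
  Hent mu (fun x => (f x, g x)) (list_prod lf lg) = Hent mu f lf.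
Proof.
  intros HP (F1&F2&F3) (G1&G2&G3) Hh. rewrite Hent_pair. unfold Hent.
  apply sumR_ext. intros u _.
  destruct (classic (In (h u) lg)) as [Hi|Hi].
  - rewrite (sumR_single _ _ (h u)); auto.
    + f_equal. apply mu_ext. intro x; split; [tauto|]. intros E; split; auto. rewrite Hh, E; auto.
    + intros v _ Hv. rewrite (mu_empty' M); auto using phi0. intros x [E1 E2]. apply Hv. rewrite <- E2, Hh, E1; auto.
  - rewrite sumR_zero.
    + rewrite (mu_empty' M mu); auto using phi0. intros x E. apply Hi. rewrite <- E, <- Hh; auto.
    + intros v Hv. rewrite (mu_empty' M); auto using phi0. intros x [E1 E2]. apply Hi. rewrite <- E1, <- Hh, E2; auto.
Qed.

Lemma Hswap {X A B} (mu : (X -> Prop) -> R) (f : X -> A) lf (g : X -> B) lg :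
  Hent mu (fun x => (f x, g x)) (list_prod lf lg) = Hent mu (fun x => (g x, f x)) (list_prod lg lf).
Proof.
  rewrite !Hent_pair. rewrite sumR_swap. apply sumR_ext; intros; apply sumR_ext; intros.
  f_equal; apply mu_ext; tauto.
Qed.

Lemma Heq {X A B} M mu (f : X -> A) lf (g : X -> B) lg (h : A -> B) (h' : B -> A) :
  probability_measure M mu -> Good M f lf -> Good M g lg -> (forall x, g x = h (f x)) ->
  (forall x, f x = h' (g x)) -> Hent mu f lf = Hent mu g lg.
Proof.
  intros. rewrite <- (Hdet M mu f lf g lg h), Hswap, (Hdet M mu g lg f lf h'); auto.
Qed.

Lemma ent_term_eq m mc : 0 <= m -> m <= mc -> ent_term m mc = phi m + m * ln mc.
Proof.
  intros H1 H2. unfold ent_term, phi. destruct (Rle_dec m 0).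
  - assert (m = 0) by lra. subst. ring.
  - unfold Rdiv. rewrite ln_mult, ln_Rinv by (try apply Rinv_0_lt_compat; lra). ring.
Qed.

Lemma Hcond_eq {X A C} M mu (a : X -> A) la (c : X -> C) lc :
  probability_measure M mu -> Good M a la -> Good M c lc ->
  Hcond mu a la c lc = Hent mu (fun x => (a x, c x)) (list_prod la lc) - Hent mu c lc.
Proof.
  intros HP Ga Gc. pose proof HP as (HS&_). pose proof Ga as (A1&A2&A3). pose proof Gc as (C1&C2&C3).
  unfold Hcond. rewrite Hent_pair.
  rewrite (sumR_ext la _ (fun u => sumR lc (fun v => phi (mu (fun x => a x = u /\ c x = v)) + mu (fun x => a x = u /\ c x = v) * ln (mu (fun x => c x = v))))).
  2:{ intros u _. apply sumR_ext. intros v _. apply ent_term_eq.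
      - apply (mu_nonneg M); auto. apply M_inter; auto.
      - apply (mu_mono M); auto. apply M_inter; auto. tauto. }
  rewrite (sumR_ext la _ (fun u => sumR lc (fun v => phi (mu (fun x => a x = u /\ c x = v))) + sumR lc (fun v => mu (fun x => a x = u /\ c x = v) * ln (mu (fun x => c x = v))))).
  2:{ intros; apply sumR_plus. }
  rewrite sumR_plus. unfold Rminus. f_equal.
  rewrite sumR_swap. unfold Hent. rewrite <- sumR_opp. apply sumR_ext. intros v _.
  rewrite (sumR_ext la _ (fun u => ln (mu (fun x => c x = v)) * mu (fun x => c x = v /\ a x = u))).
  2:{ intros u _. rewrite Rmult_comm. f_equal. apply mu_ext; tauto. }
  rewrite sumR_scal. rewrite (sum_cover M); auto. unfold phi. ring.
Qed.

Lemma Hmono {X A B} M mu (f : X -> A) lf (g : X -> B) lg :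
  probability_measure M mu -> Good M f lf -> Good M g lg ->
  Hent mu g lg <= Hent mu (fun x => (f x, g x)) (list_prod lf lg).
Proof.
  intros HP Gf Gg. pose proof HP as (HS&_). pose proof Gf as (A1&A2&A3). pose proof Gg as (C1&C2&C3).
  rewrite Hent_pair, sumR_swap. unfold Hent. apply sumR_le. intros v _.
  assert (E : phi (mu (fun x => g x = v)) = sumR lf (fun u => - (mu (fun x => g x = v /\ f x = u) * ln (mu (fun x => g x = v))))).
  { rewrite sumR_opp. rewrite (sumR_ext lf _ (fun u => ln (mu (fun x => g x = v)) * mu (fun x => g x = v /\ f x = u))) by (intros; ring).
    rewrite sumR_scal, (sum_cover M); auto. unfold phi; ring. }
  rewrite E. apply sumR_le. intros u _.
  rewrite (mu_ext mu (fun x => f x = u /\ g x = v) (fun x => g x = v /\ f x = u)) by tauto.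
  set (m := mu (fun x => g x = v /\ f x = u)). set (mc := mu (fun x => g x = v)).
  assert (0 <= m) by (apply (mu_nonneg M); auto; apply M_inter; auto).
  assert (m <= mc) by (apply (mu_mono M); auto; [apply M_inter; auto|tauto]).
  unfold phi. destruct (Req_dec m 0) as [->|Hm]; [lra|].
  assert (ln m <= ln mc).
  { destruct (Req_dec m mc) as [<-|]; [lra|]. left; apply ln_increasing; lra. }
  nra.
Qed.

Lemma ln_le_sub1 t : 0 < t -> ln t <= t - 1.
Proof. intro H. pose proof (exp_ineq1_le (ln t)). rewrite exp_ln in H0 by auto. lra. Qed.

Lemma ssa_point x y z W : 0 <= x -> x <= y -> x <= z -> y <= W -> z <= W ->
  phi x + - (x * ln W) <= - (x * ln y) + - (x * ln z) + (y * z * / W - x).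
Proof.
  intros H0 H1 H2 H3 H4. unfold phi.
  destruct (Req_dec x 0) as [->|Hx].
  - assert (0 <= / W).
    { destruct (Req_dec W 0) as [->|]; [rewrite Rinv_0; lra|]. left; apply Rinv_0_lt_compat; lra. }
    assert (0 <= y * z) by nra. nra.
  - assert (0 < x) by lra.
    set (t := y * z * / (x * W)).
    assert (Ht : 0 < t) by (unfold t; apply Rmult_lt_0_compat; [nra|apply Rinv_0_lt_compat; nra]).
    assert (Hl : ln t = ln y + ln z - ln x - ln W).
    { unfold t. rewrite ln_mult, ln_mult, ln_Rinv, ln_mult by (try apply Rinv_0_lt_compat; nra). ring. }
    pose proof (ln_le_sub1 t Ht) as Hle. rewrite Hl in Hle.
    assert (x * t = y * z * / W) by (unfold t; field; lra).
    nra.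
Qed.

Definition T3 {A B C} (la : list A) (lb : list B) (lc : list C) (F : B -> A -> C -> R) : R :=
  sumR lb (fun v => sumR la (fun u => sumR lc (fun w => F v u w))).

Lemma T3_plus {A B C} la lb lc (F G : B -> A -> C -> R) :
  @T3 A B C la lb lc (fun v u w => F v u w + G v u w) = T3 la lb lc F + T3 la lb lc G.
Proof. unfold T3. rewrite <- sumR_plus. apply sumR_ext; intros. rewrite <- sumR_plus. apply sumR_ext; intros. apply sumR_plus. Qed.

Lemma T3_le {A B C} la lb lc (F G : B -> A -> C -> R) :
  (forall v u w, In v lb -> In u la -> In w lc -> F v u w <= G v u w) ->
  @T3 A B C la lb lc F <= T3 la lb lc G.
Proof. intro H. unfold T3. apply sumR_le; intros. apply sumR_le; intros. apply sumR_le; intros. auto. Qed.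

Lemma SSA {X A B C} M mu (a : X -> A) la (b : X -> B) lb (c : X -> C) lc :
  probability_measure M mu -> Good M a la -> Good M b lb -> Good M c lc ->
  Hent mu (fun x => (a x, (b x, c x))) (list_prod la (list_prod lb lc)) + Hent mu b lb <=
  Hent mu (fun x => (a x, b x)) (list_prod la lb) + Hent mu (fun x => (b x, c x)) (list_prod lb lc).
Proof.
  intros HP Ga Gb Gc. pose proof HP as (HS&_).
  pose proof Ga as (A1&A2&A3). pose proof Gb as (B1&B2&B3). pose proof Gc as (C1&C2&C3).
  set (x3 := fun v u w => mu (fun x => a x = u /\ b x = v /\ c x = w)).
  set (y := fun v u => mu (fun x => a x = u /\ b x = v)).
  set (z := fun v w => mu (fun x => b x = v /\ c x = w)).
  set (W := fun v => mu (fun x => b x = v)).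
  assert (Mab : forall u v, M (fun x => a x = u /\ b x = v)) by (intros; apply M_inter; auto).
  assert (Mbc : forall v w, M (fun x => b x = v /\ c x = w)) by (intros; apply M_inter; auto).
  assert (sw : forall v u, sumR lc (fun w => x3 v u w) = y v u).
  { intros v u. unfold x3, y. rewrite <- (sum_cover M mu (fun x => a x = u /\ b x = v) c lc); auto.
    apply sumR_ext; intros; apply mu_ext; tauto. }
  assert (su : forall v, sumR la (fun u => y v u) = W v).
  { intros v. unfold y, W. rewrite <- (sum_cover M mu (fun x => b x = v) a la); auto.
    apply sumR_ext; intros; apply mu_ext; tauto. }
  assert (sux : forall v w, sumR la (fun u => x3 v u w) = z v w).
  { intros v w. unfold x3, z. rewrite <- (sum_cover M mu (fun x => b x = v /\ c x = w) a la); auto.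
    apply sumR_ext; intros; apply mu_ext; tauto. }
  assert (swz : forall v, sumR lc (fun w => z v w) = W v).
  { intros v. unfold z, W. rewrite <- (sum_cover M mu (fun x => b x = v) c lc); auto. }
  assert (E1 : Hent mu (fun x => (a x, (b x, c x))) (list_prod la (list_prod lb lc)) = T3 la lb lc (fun v u w => phi (x3 v u w))).
  { rewrite Hent_pair. unfold T3.
    rewrite (sumR_ext la _ (fun u => sumR lb (fun v => sumR lc (fun w => phi (x3 v u w))))).
    2:{ intros u _. rewrite sumR_prod. apply sumR_ext; intros v _. apply sumR_ext; intros w _.
        unfold x3. f_equal. apply mu_ext. intro x; split; [intros [h1 h2]; inversion h2; auto|intros (->&->&->); auto]. }
    apply sumR_swap. }
  assert (E2 : Hent mu b lb = T3 la lb lc (fun v u w => - (x3 v u w * ln (W v)))).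
  { unfold Hent, T3. apply sumR_ext; intros v _.
    rewrite (sumR_ext la _ (fun u => - (ln (W v) * y v u))).
    2:{ intros u _. rewrite sumR_opp. f_equal. rewrite <- sw. rewrite <- sumR_scal. apply sumR_ext; intros; ring. }
    rewrite sumR_opp, sumR_scal, su. unfold phi, W. ring. }
  assert (E3 : Hent mu (fun x => (a x, b x)) (list_prod la lb) = T3 la lb lc (fun v u w => - (x3 v u w * ln (y v u)))).
  { rewrite Hent_pair, sumR_swap. unfold T3. apply sumR_ext; intros v _. apply sumR_ext; intros u _.
    rewrite sumR_opp. rewrite (sumR_ext lc _ (fun w => ln (y v u) * x3 v u w)) by (intros; ring).
    rewrite sumR_scal, sw. unfold phi, y. ring. }
  assert (E4 : Hent mu (fun x => (b x, c x)) (list_prod lb lc) = T3 la lb lc (fun v u w => - (x3 v u w * ln (z v w)))).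
  { rewrite Hent_pair. unfold T3. apply sumR_ext; intros v _. rewrite sumR_swap. apply sumR_ext; intros w _.
    rewrite sumR_opp. rewrite (sumR_ext la _ (fun u => ln (z v w) * x3 v u w)) by (intros; ring).
    rewrite sumR_scal, sux. unfold phi, z. ring. }
  assert (E5 : T3 la lb lc (fun v u w => y v u * z v w * / W v - x3 v u w) = 0).
  { unfold T3. apply sumR_zero. intros v _.
    rewrite (sumR_ext la _ (fun u => y v u * / W v * W v - y v u)).
    2:{ intros u _. rewrite (sumR_ext lc _ (fun w => (y v u * / W v) * z v w + - x3 v u w)) by (intros; ring).
        rewrite sumR_plus, sumR_scal, sumR_opp, swz, sw. ring. }
    rewrite (sumR_ext la _ (fun u => (/ W v * W v) * y v u + - y v u)) by (intros; ring).
    rewrite sumR_plus, sumR_scal, sumR_opp, su.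
    destruct (Req_dec (W v) 0) as [E|E]; [rewrite E; ring|field; auto]. }
  rewrite E1, E2, E3, E4, <- T3_plus.
  apply (Rle_trans _ (T3 la lb lc (fun v u w => - (x3 v u w * ln (y v u))) + T3 la lb lc (fun v u w => - (x3 v u w * ln (z v w))) + T3 la lb lc (fun v u w => y v u * z v w * / W v - x3 v u w))); [|lra].
  rewrite <- !T3_plus. apply T3_le. intros v u w _ _ _.
  apply ssa_point; unfold x3, y, z, W.
  - apply (mu_nonneg M); auto. apply M_inter; auto.
  - apply (mu_mono M); auto; [apply M_inter; auto|tauto].
  - apply (mu_mono M); auto; [apply M_inter; auto|tauto].
  - apply (mu_mono M); auto; tauto.
  - apply (mu_mono M); auto; tauto.
Qed.



Lemma Tz_iter {X} (T Tinv : X -> X) n x :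
  Tz T Tinv n x = if (0 <=? n)%Z then Nat.iter (Z.to_nat n) T x else Nat.iter (Z.to_nat (- n)) Tinv x.
Proof. destruct n; reflexivity. Qed.

Lemma Tz_succ_r {X} (T Tinv : X -> X) n x : (forall x, Tinv (T x) = x) ->
  Tz T Tinv (n + 1) x = Tz T Tinv n (T x).
Proof.
  intro Hinv. rewrite !Tz_iter.
  destruct (Z.leb_spec 0 n).
  - destruct (Z.leb_spec 0 (n+1)); [|lia].
    replace (Z.to_nat (n+1)) with (S (Z.to_nat n)) by lia.
    rewrite Nat.iter_succ_r. reflexivity.
  - destruct (Z.leb_spec 0 (n+1)).
    + assert (n = -1)%Z by lia. subst. simpl. auto.
    + replace (Z.to_nat (- n)) with (S (Z.to_nat (- (n+1)))) by lia.
      rewrite Nat.iter_succ_r, Hinv. reflexivity.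
Qed.

Lemma iter_meas {X} M (f : X -> X) n : measurable_map M f ->
  forall A, M A -> M (fun x => A (Nat.iter n f x)).
Proof.
  intro Hf. induction n; intros A HA; simpl; auto.
  apply (IHn (fun y => A (f y))). apply Hf; auto.
Qed.

Lemma Tz_meas {X} M (T Tinv : X -> X) n : measurable_map M T -> measurable_map M Tinv ->
  forall A, M A -> M (fun x => A (Tz T Tinv n x)).
Proof.
  intros HT HTi A HA. destruct n; simpl; auto; apply iter_meas; auto.
Qed.

Lemma joinP_cons {X} (T Tinv : X -> X) p n F x :
  joinP T Tinv p (n :: F) x = p (Tz T Tinv n x) :: joinP T Tinv p F x.
Proof. reflexivity. Qed.

Lemma joinP_app {X} (T Tinv : X -> X) p F G x :
  joinP T Tinv p (F ++ G) x = joinP T Tinv p F x ++ joinP T Tinv p G x.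
Proof. unfold joinP. apply map_app. Qed.

Lemma joinP_length {X} (T Tinv : X -> X) p F x : length (joinP T Tinv p F x) = length F.
Proof. unfold joinP. apply length_map. Qed.

Lemma joinP_meas {X} M (T Tinv : X -> X) k p : sigma_algebra M ->
  measurable_map M T -> measurable_map M Tinv -> finite_partition M k p ->
  forall F u, M (fun x => joinP T Tinv p F x = u).
Proof.
  intros HS HT HTi [_ Hp]. induction F as [|n F IH]; intros u.
  - destruct u as [|i u].
    + apply (M_ext M (fun _ => True)); [intro; unfold joinP; simpl; tauto|apply HS].
    + apply (M_ext M (fun _ => False)); [intro; unfold joinP; simpl; split; [tauto|discriminate]|apply M_empty; auto].
  - destruct u as [|i u].
    + apply (M_ext M (fun _ => False)); [intro; rewrite joinP_cons; split; [tauto|discriminate]|apply M_empty; auto].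
    + apply (M_ext M (fun x => (fun y => p y = i) (Tz T Tinv n x) /\ joinP T Tinv p F x = u)).
      { intro x; rewrite joinP_cons; split; [intros [-> ->]; auto|intro E; inversion E; auto]. }
      apply M_inter; auto. apply (Tz_meas M T Tinv n HT HTi (fun y => p y = i)); auto.
Qed.

Lemma NoDup_flat_map_cons (l : list nat) (L : list (list nat)) :
  NoDup l -> NoDup L -> NoDup (flat_map (fun i => map (cons i) L) l).
Proof.
  induction l as [|a l IH]; intros H1 H2; simpl; [constructor|].
  inversion H1; subst. apply NoDup_app; auto.
  - apply FinFun.Injective_map_NoDup; auto. intros x y E; inversion E; auto.
  - intros w Hw Hw2. apply in_map_iff in Hw. destruct Hw as [v [<- _]].
    apply in_flat_map in Hw2. destruct Hw2 as [i [Hi Hv]]. apply in_map_iff in Hv.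
    destruct Hv as [v' [E _]]. inversion E; subst. auto.
Qed.

Lemma words_NoDup k m : NoDup (words k m).
Proof. induction m; simpl; [repeat constructor; auto|]. apply NoDup_flat_map_cons; auto. apply seq_NoDup. Qed.

Lemma In_words k m u : length u = m -> (forall i, In i u -> (i < k)%nat) -> In u (words k m).
Proof.
  revert u. induction m; intros u Hl Hk.
  - destruct u; [simpl; auto|discriminate].
  - destruct u as [|i u]; [discriminate|]. simpl. apply in_flat_map. exists i. split.
    + apply in_seq. assert (i < k)%nat by (apply Hk; simpl; auto). lia.
    + apply in_map. apply IHm; [simpl in Hl; lia|]. intros; apply Hk; simpl; auto.
Qed.

Lemma Good_joinP {X} M (T Tinv : X -> X) k p : sigma_algebra M ->
  measurable_map M T -> measurable_map M Tinv -> finite_partition M k p ->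
  forall F, Good M (joinP T Tinv p F) (words k (length F)).
Proof.
  intros HS HT HTi Hp F. split; [apply (words_NoDup k)|split].
  - intro x. apply In_words; [apply joinP_length|]. intros i Hi. unfold joinP in Hi.
    apply in_map_iff in Hi. destruct Hi as [n [<- _]]. apply Hp.
  - apply (joinP_meas M T Tinv k p); auto.
Qed.


Fixpoint zidx (n : Z) (L : list Z) : nat :=
  match L with [] => 0%nat | a :: L' => if Z.eq_dec n a then 0%nat else S (zidx n L') end.

Lemma nth_zidx {B} n L (f : Z -> B) d : In n L -> nth (zidx n L) (map f L) d = f n.
Proof.
  induction L as [|a L IH]; intro H; [destruct H|]. simpl.
  destruct (Z.eq_dec n a) as [->|Hne]; auto. apply IH. destruct H; [congruence|auto].
Qed.

Definition sel (L F : list Z) (u : list nat) : list nat := map (fun n => nth (zidx n L) u 0%nat) F.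

Lemma joinP_sel {X} (T Tinv : X -> X) p F L x : incl F L ->
  joinP T Tinv p F x = sel L F (joinP T Tinv p L x).
Proof.
  intro H. unfold sel, joinP. apply map_ext_in. intros n Hn.
  rewrite (nth_zidx n L (fun n => p (Tz T Tinv n x))); auto.
Qed.

Definition HF {X} (mu : (X -> Prop) -> R) (T Tinv : X -> X) (k : nat) (p : X -> nat) (F : list Z) : R :=
  Hent mu (joinP T Tinv p F) (words k (length F)).

Definition sysOK {X} (M : (X -> Prop) -> Prop) (mu : (X -> Prop) -> R) (T Tinv : X -> X) k p :=
  ppsystem M mu T Tinv /\ finite_partition M k p.

Lemma sys_prob {X} M mu (T Tinv : X -> X) k p : sysOK M mu T Tinv k p -> probability_measure M mu.
Proof. intros [H _]; apply H. Qed.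

Lemma sys_good {X} M mu (T Tinv : X -> X) k p : sysOK M mu T Tinv k p ->
  forall F, Good M (joinP T Tinv p F) (words k (length F)).
Proof. intros [(HP&HT&HTi&_) Hp]. apply Good_joinP; auto. apply HP. Qed.

Lemma HF_set {X} M mu (T Tinv : X -> X) k p F G : sysOK M mu T Tinv k p ->
  (forall n, In n F <-> In n G) -> HF mu T Tinv k p F = HF mu T Tinv k p G.
Proof.
  intros Hs H. unfold HF. apply (Heq M mu _ _ _ _ (sel F G) (sel G F)).
  - eapply sys_prob; eauto.
  - eapply sys_good; eauto.
  - eapply sys_good; eauto.
  - intro x. apply joinP_sel. intros n Hn; apply H; auto.
  - intro x. apply joinP_sel. intros n Hn; apply H; auto.
Qed.

Lemma HF_pair {X} M mu (T Tinv : X -> X) k p F G : sysOK M mu T Tinv k p ->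
  Hent mu (fun x => (joinP T Tinv p F x, joinP T Tinv p G x)) (list_prod (words k (length F)) (words k (length G)))
  = HF mu T Tinv k p (F ++ G).
Proof.
  intros Hs. pose proof (sys_prob _ _ _ _ _ _ Hs) as HP. pose proof HP as (HS&_). unfold HF.
  apply (Heq M mu _ _ _ _ (fun uv => fst uv ++ snd uv) (fun u => (sel (F ++ G) F u, sel (F ++ G) G u))); auto.
  - apply Good_pair; auto; eapply sys_good; eauto.
  - eapply sys_good; eauto.
  - intro x. simpl. rewrite joinP_app. auto.
  - intro x. rewrite <- !joinP_sel; auto; intros n Hn; apply in_or_app; auto.
Qed.

Lemma HF_pair3 {X} M mu (T Tinv : X -> X) k p F G K : sysOK M mu T Tinv k p ->
  Hent mu (fun x => (joinP T Tinv p F x, (joinP T Tinv p G x, joinP T Tinv p K x)))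
    (list_prod (words k (length F)) (list_prod (words k (length G)) (words k (length K))))
  = HF mu T Tinv k p (F ++ G ++ K).
Proof.
  intros Hs. pose proof (sys_prob _ _ _ _ _ _ Hs) as HP. pose proof HP as (HS&_). unfold HF.
  apply (Heq M mu _ _ _ _ (fun uv => fst uv ++ fst (snd uv) ++ snd (snd uv))
     (fun u => (sel (F ++ G ++ K) F u, (sel (F ++ G ++ K) G u, sel (F ++ G ++ K) K u)))); auto.
  - apply Good_pair; auto; [eapply sys_good; eauto|]. apply Good_pair; auto; eapply sys_good; eauto.
  - eapply sys_good; eauto.
  - intro x. simpl. rewrite !joinP_app. auto.
  - intro x. rewrite <- !joinP_sel; auto; intros n Hn; rewrite !in_app_iff; auto.
Qed.

Lemma HF_shift1 {X} M mu (T Tinv : X -> X) k p F : sysOK M mu T Tinv k p ->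
  HF mu T Tinv k p (map (fun n => (n + 1)%Z) F) = HF mu T Tinv k p F.
Proof.
  intros Hs. pose proof Hs as [(HP&HT&HTi&_&Hinv&Hmp) Hp]. unfold HF, Hent. rewrite length_map.
  apply sumR_ext. intros u _. f_equal.
  rewrite (mu_ext mu _ (fun x => (fun y => joinP T Tinv p F y = u) (T x))).
  2:{ intro x. unfold joinP. rewrite map_map.
      rewrite (map_ext _ (fun n => p (Tz T Tinv n (T x)))); [tauto|].
      intro n. rewrite Tz_succ_r; auto. }
  apply (Hmp (fun y => joinP T Tinv p F y = u)). apply (joinP_meas M T Tinv k p); auto. apply HP.
Qed.

Lemma HF_shift_nat {X} M mu (T Tinv : X -> X) k p F j : sysOK M mu T Tinv k p ->
  HF mu T Tinv k p (map (fun n => (n + Z.of_nat j)%Z) F) = HF mu T Tinv k p F.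
Proof.
  intros Hs. induction j.
  - f_equal. rewrite (map_ext _ (fun n => n)) by (intro; lia). apply map_id.
  - rewrite <- IHj, <- (HF_shift1 M mu T Tinv k p (map (fun n => (n + Z.of_nat j)%Z) F) Hs), map_map. f_equal. apply map_ext. intro; lia.
Qed.

Lemma HF_shift {X} M mu (T Tinv : X -> X) k p F s : sysOK M mu T Tinv k p ->
  HF mu T Tinv k p (map (fun n => (n + s)%Z) F) = HF mu T Tinv k p F.
Proof.
  intros Hs. destruct (Z.leb_spec 0 s).
  - rewrite <- (HF_shift_nat M mu T Tinv k p F (Z.to_nat s) Hs). f_equal. apply map_ext. intro; lia.
  - rewrite <- (HF_shift_nat M mu T Tinv k p (map (fun n => (n + s)%Z) F) (Z.to_nat (- s)) Hs).
    rewrite map_map. f_equal. rewrite (map_ext _ (fun n => n)) by (intro; lia). apply map_id.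
Qed.

Lemma In_Zint a b n : In n (Zinterval a b) <-> (a <= n < b)%Z.
Proof.
  unfold Zinterval. rewrite in_map_iff. split.
  - intros [i [<- Hi]]. apply in_seq in Hi. lia.
  - intro H. exists (Z.to_nat (n - a)). split; [lia|]. apply in_seq. lia.
Qed.

Lemma NoDup_Zint a b : NoDup (Zinterval a b).
Proof. unfold Zinterval. apply FinFun.Injective_map_NoDup; [intros x y E; lia|apply seq_NoDup]. Qed.

Lemma length_Zint a b : length (Zinterval a b) = Z.to_nat (b - a).
Proof. unfold Zinterval. rewrite length_map, length_seq. reflexivity. Qed.

Definition Hn {X} (mu : (X -> Prop) -> R) (T Tinv : X -> X) k p (m : nat) : R :=
  HF mu T Tinv k p (Zinterval 0 (Z.of_nat m)).

Lemma HF_Zint {X} M mu (T Tinv : X -> X) k p c e : sysOK M mu T Tinv k p ->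
  HF mu T Tinv k p (Zinterval c e) = Hn mu T Tinv k p (Z.to_nat (e - c)).
Proof.
  intros Hs. unfold Hn. rewrite <- (HF_shift M mu T Tinv k p (Zinterval 0 (Z.of_nat (Z.to_nat (e - c)))) c Hs). f_equal.
  unfold Zinterval. rewrite map_map. replace (Z.of_nat (Z.to_nat (e - c)) - 0)%Z with (Z.of_nat (Z.to_nat (e - c))) by lia.
  rewrite Nat2Z.id. apply map_ext. intro; lia.
Qed.

Lemma HF_intset {X} M mu (T Tinv : X -> X) k p F c e : sysOK M mu T Tinv k p ->
  NoDup F -> (forall n, In n F <-> (c <= n < e)%Z) -> HF mu T Tinv k p F = Hn mu T Tinv k p (length F).
Proof.
  intros Hs Hnd H. rewrite (HF_set M mu T Tinv k p F (Zinterval c e) Hs).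
  2:{ intro n. rewrite H, In_Zint. tauto. }
  rewrite (HF_Zint M mu T Tinv k p c e Hs). f_equal.
  rewrite <- length_Zint. apply Permutation_length. apply NoDup_Permutation; auto using NoDup_Zint.
  intro n. rewrite H, In_Zint. tauto.
Qed.

Lemma HF_setint {X} M mu (T Tinv : X -> X) k p F c e : sysOK M mu T Tinv k p ->
  (forall n, In n F <-> (c <= n < e)%Z) -> HF mu T Tinv k p F = Hn mu T Tinv k p (Z.to_nat (e - c)).
Proof.
  intros Hs H. rewrite (HF_set M mu T Tinv k p F (Zinterval c e) Hs), (HF_Zint M mu T Tinv k p c e Hs); auto.
  intro n. rewrite H, In_Zint. tauto.
Qed.

Lemma Hn_mono {X} M mu (T Tinv : X -> X) k p n : sysOK M mu T Tinv k p ->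
  Hn mu T Tinv k p n <= Hn mu T Tinv k p (S n).
Proof.
  intros Hs. pose proof (sys_prob _ _ _ _ _ _ Hs) as HP.
  pose proof (Hmono M mu (joinP T Tinv p [0%Z]) _ (joinP T Tinv p (Zinterval 1 (Z.of_nat n + 1))) _ HP
     (sys_good _ _ _ _ _ _ Hs _) (sys_good _ _ _ _ _ _ Hs _)) as H.
  rewrite (HF_pair M mu T Tinv k p _ _ Hs) in H. fold (HF mu T Tinv k p (Zinterval 1 (Z.of_nat n + 1))) in H.
  rewrite (HF_Zint M mu T Tinv k p _ _ Hs) in H.
  rewrite (HF_setint M mu T Tinv k p _ 0 (Z.of_nat n + 1) Hs) in H.
  2:{ intro m. simpl. rewrite In_Zint. lia. }
  replace (Z.to_nat (Z.of_nat n + 1 - 1)) with n in H by lia.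
  replace (Z.to_nat (Z.of_nat n + 1 - 0)) with (S n) in H by lia. auto.
Qed.

Lemma Hn_ssa {X} M mu (T Tinv : X -> X) k p n : sysOK M mu T Tinv k p ->
  Hn mu T Tinv k p (S (S n)) + Hn mu T Tinv k p n <= Hn mu T Tinv k p (S n) + Hn mu T Tinv k p (S n).
Proof.
  intros Hs. pose proof (sys_prob _ _ _ _ _ _ Hs) as HP.
  pose proof (SSA M mu (joinP T Tinv p [0%Z]) _ (joinP T Tinv p (Zinterval 1 (Z.of_nat n + 1))) _
     (joinP T Tinv p [(Z.of_nat n + 1)%Z]) _ HP
     (sys_good _ _ _ _ _ _ Hs _) (sys_good _ _ _ _ _ _ Hs _) (sys_good _ _ _ _ _ _ Hs _)) as H.
  rewrite (HF_pair3 M mu T Tinv k p _ _ _ Hs), !(HF_pair M mu T Tinv k p _ _ Hs) in H.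
  fold (HF mu T Tinv k p (Zinterval 1 (Z.of_nat n + 1))) in H.
  rewrite (HF_Zint M mu T Tinv k p _ _ Hs) in H.
  rewrite (HF_setint M mu T Tinv k p _ 0 (Z.of_nat n + 2) Hs) in H.
  2:{ intro m. simpl. rewrite in_app_iff, In_Zint. simpl. lia. }
  rewrite (HF_setint M mu T Tinv k p ([0%Z] ++ _) 0 (Z.of_nat n + 1) Hs) in H.
  2:{ intro m. simpl. rewrite In_Zint. lia. }
  rewrite (HF_setint M mu T Tinv k p (Zinterval 1 (Z.of_nat n + 1) ++ _) 1 (Z.of_nat n + 2) Hs) in H.
  2:{ intro m. rewrite in_app_iff, In_Zint. simpl. lia. }
  replace (Z.to_nat (Z.of_nat n + 1 - 1)) with n in H by lia.
  replace (Z.to_nat (Z.of_nat n + 2 - 1)) with (S n) in H by lia.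
  replace (Z.to_nat (Z.of_nat n + 1 - 0)) with (S n) in H by lia.
  replace (Z.to_nat (Z.of_nat n + 2 - 0)) with (S (S n)) in H by lia. lra.
Qed.


Fixpoint sumE (f : nat -> R) (m : nat) : R :=
  match m with O => 0 | S m' => sumE f m' + f m' end.

Lemma sumE_le f g m : (forall j, (j < m)%nat -> f j <= g j) -> sumE f m <= sumE g m.
Proof. induction m; intro H; simpl; [lra|]. assert (f m <= g m) by (apply H; lia).
  assert (sumE f m <= sumE g m) by (apply IHm; intros; apply H; lia). lra. Qed.

Lemma sumE_const c m : sumE (fun _ => c) m = INR m * c.
Proof. induction m; simpl sumE; [simpl; ring|]. rewrite IHm, S_INR; ring. Qed.

Lemma seq_main (H : nat -> R) : (forall n, H n <= H (S n)) ->
  (forall n, H (S (S n)) + H n <= H (S n) + H (S n)) ->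
  exists g : nat -> R, (forall m, 0 <= g m) /\
    (forall eps, eps > 0 -> exists N : nat, forall m : nat, (N <= m)%nat -> g m <= eps * INR m) /\
    (forall s t m, H (s + m)%nat - H s - H (s + t + m)%nat + H (s + t)%nat <= g m).
Proof.
  intros Hm Hs.
  set (e := fun n => H (S n) - H n).
  assert (Hdec : Un_decreasing e) by (intro n; unfold e; specialize (Hs n); lra).
  assert (Hlb : has_lb e) by (exists 0; intros x [n ->]; unfold opp_seq, e; specialize (Hm n); lra).
  destruct (decreasing_cv e Hdec Hlb) as [l Hl].
  pose proof (decreasing_ineq e l Hdec Hl) as Hle.
  assert (Hd2 : forall i d, e (i + d)%nat <= e i).
  { intros i d; induction d; [rewrite Nat.add_0_r; lra|]. replace (i + S d)%nat with (S (i + d)) by lia.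
    specialize (Hdec (i + d)%nat). lra. }
  assert (HD : forall s m, H (s + m)%nat - H s = sumE (fun j => e (s + j)%nat) m).
  { intros s m; induction m; simpl sumE; [rewrite Nat.add_0_r; ring|]. rewrite <- IHm. unfold e.
    replace (s + S m)%nat with (S (s + m)) by lia. ring. }
  exists (fun m => sumE e m - INR m * l). split; [|split].
  - intro m. rewrite <- sumE_const. assert (sumE (fun _ => l) m <= sumE e m) by (apply sumE_le; auto). lra.
  - intros eps Heps. destruct (Hl (eps / 2)) as [N0 HN0]; [lra|].
    set (C := sumE e N0 - INR N0 * l).
    assert (Hg : forall d, sumE e (N0 + d) - INR (N0 + d) * l <= C + INR d * (eps / 2)).
    { induction d; [rewrite Nat.add_0_r; simpl; unfold C; lra|].
      replace (N0 + S d)%nat with (S (N0 + d)) by lia. simpl sumE. rewrite !S_INR.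
      specialize (HN0 (N0 + d)%nat ltac:(lia)). unfold R_dist in HN0. apply Rabs_def2 in HN0. lra. }
    destruct (INR_unbounded (C / (eps / 2))) as [N1 HN1].
    exists (N0 + N1)%nat. intros m Hmn.
    replace m with (N0 + (m - N0))%nat by lia. eapply Rle_trans; [apply Hg|].
    assert (HC : C <= INR N1 * (eps / 2)).
    { apply (Rmult_le_reg_r (/ (eps / 2))); [apply Rinv_0_lt_compat; lra|].
      replace (INR N1 * (eps / 2) * / (eps / 2)) with (INR N1) by (field; lra). unfold Rdiv in HN1. lra. }
    assert (INR N1 <= INR (N0 + (m - N0))) by (apply le_INR; lia).
    assert (INR (m - N0) <= INR (N0 + (m - N0))) by (apply le_INR; lia).
    nra.
  - intros s t m. rewrite Rplus_comm. unfold Rminus at 2.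
    assert (E1 := HD s m). assert (E2 := HD (s + t)%nat m).
    assert (sumE (fun j => e (s + j)%nat) m <= sumE e m) by (apply sumE_le; intros j _; rewrite Nat.add_comm; apply Hd2).
    assert (INR m * l <= sumE (fun j => e (s + t + j)%nat) m) by (rewrite <- sumE_const; apply sumE_le; intros; apply Hle).
    lra.
Qed.


Lemma In_existsb n l : existsb (Z.eqb n) l = true <-> In n l.
Proof. rewrite existsb_exists. split; [intros [x [Hx E]]; apply Z.eqb_eq in E; subst; auto|intro H; exists n; split; auto; apply Z.eqb_refl]. Qed.

Lemma In_Zdiff x J I : In x (Zdiff J I) <-> In x J /\ ~ In x I.
Proof. unfold Zdiff. rewrite filter_In, Bool.negb_true_iff, <- Bool.not_true_iff_false, In_existsb. tauto. Qed.

Lemma len_set (l1 l2 : list Z) : NoDup l1 -> NoDup l2 -> (forall x, In x l1 <-> In x l2) -> length l1 = length l2.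
Proof. intros. apply Permutation_length, NoDup_Permutation; auto. Qed.

Theorem mainTheorem14 (X : Type) (M : (X -> Prop) -> Prop) (mu : (X -> Prop) -> R)
  (T Tinv : X -> X) (k : nat) (p : X -> nat) :
  ppsystem M mu T Tinv ->
  finite_partition M k p ->
  exists g : nat -> R,
    (forall m, 0 <= g m) /\
    (forall eps, eps > 0 -> exists N : nat, forall m : nat, (N <= m)%nat ->
        g m <= eps * INR m) /\
    (forall a1 b1 a2 b2 : Z,
       let I := Zinterval a1 b1 in
       let J := Zinterval a2 b2 in
       is_Zinterval (fun n => In n I \/ In n J) ->
       Ipart mu T Tinv k p J I (Zinter I J) <= g (length (Zdiff J I))).
Proof.
  intros Hsys Hpart.
  assert (Hs : sysOK M mu T Tinv k p) by (split; auto).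
  pose proof (sys_prob _ _ _ _ _ _ Hs) as HP. pose proof HP as (HS&_).
  destruct (seq_main (Hn mu T Tinv k p) (fun n => Hn_mono M mu T Tinv k p n Hs) (fun n => Hn_ssa M mu T Tinv k p n Hs))
    as [g [g0 [go gb]]].
  exists g. split; [exact g0|split; [exact go|]].
  intros a1 b1 a2 b2 I J [a [b Hab]].
  set (K := Zinter I J).
  assert (HK : forall n, In n K <-> In n I /\ In n J).
  { intro n. unfold K, Zinter. rewrite filter_In, In_existsb. tauto. }
  assert (GI := sys_good _ _ _ _ _ _ Hs I). assert (GJ := sys_good _ _ _ _ _ _ Hs J).
  assert (GK := sys_good _ _ _ _ _ _ Hs K).
  unfold Ipart, Icond.
  rewrite (Hcond_eq M mu _ _ _ _ HP GJ GK).
  rewrite (Hcond_eq M mu _ _ _ _ HP GJ (Good_pair M _ _ _ _ HS GI GK)).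
  rewrite (HF_pair3 M mu T Tinv k p _ _ _ Hs), !(HF_pair M mu T Tinv k p _ _ Hs).
  fold (HF mu T Tinv k p K).
  set (s := length K). set (m := length (Zdiff J I)).
  set (t := length (filter (fun n => negb (existsb (Z.eqb n) J)) I)).
  assert (NI : NoDup I) by apply NoDup_Zint. assert (NJ : NoDup J) by apply NoDup_Zint.
  assert (LI : length I = (s + t)%nat).
  { unfold s, t, K, Zinter. symmetry. apply filter_length. }
  assert (LJ : length J = (s + m)%nat).
  { unfold m, Zdiff. rewrite <- (filter_length (fun n => existsb (Z.eqb n) I) J). f_equal.
    unfold s. apply len_set; try apply NoDup_filter; auto. intro x.
    rewrite HK, filter_In, In_existsb. tauto. }
  assert (LL : length (Zinterval a b) = (s + t + m)%nat).
  { rewrite <- LI. unfold m. rewrite <- length_app. apply len_set.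
    - apply NoDup_Zint.
    - apply NoDup_app; auto. apply NoDup_filter; auto.
      intros x Hx Hx2. rewrite In_Zdiff in Hx2. tauto.
    - intro x. rewrite In_Zint, <- Hab, in_app_iff, In_Zdiff.
      destruct (In_dec Z.eq_dec x I); tauto. }
  rewrite (HF_setint M mu T Tinv k p (J ++ K) a2 b2 Hs).
  2:{ intro n. rewrite in_app_iff, HK, <- In_Zint. fold J. tauto. }
  rewrite (HF_setint M mu T Tinv k p (I ++ K) a1 b1 Hs).
  2:{ intro n. rewrite in_app_iff, HK, <- In_Zint. fold I. tauto. }
  rewrite (HF_setint M mu T Tinv k p (J ++ I ++ K) a b Hs).
  2:{ intro n. rewrite !in_app_iff, HK, <- Hab. tauto. }
  rewrite (HF_intset M mu T Tinv k p K (Z.max a1 a2) (Z.min b1 b2) Hs).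
  2:{ apply NoDup_filter; auto. }
  2:{ intro n. rewrite HK. unfold I, J. rewrite !In_Zint. lia. }
  rewrite <- !length_Zint. fold I J. rewrite LI, LJ, LL.
  fold s. specialize (gb s t m). lra.
Qed.
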